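(* Let $f,g\colon X\to Y$ be continuous maps, let $\pi\colon PY\to Y\times Y$, $\pi(\gamma)=(\gamma(0),\gamma(1))$, be the path fibration, and let $q\colon P\to X$ be the pull-back of $\pi$ along $(f,g)\colon X\to Y\times Y$; that is, $P=\{(x,\gamma)\in X\times PY:\gamma(0)=f(x),\ \gamma(1)=g(x)\}$ and $q(x,\gamma)=x$. Then $\mathrm{D}(f,g)=\mathrm{secat}(q)$.
   Context: $PY$ denotes the space of continuous paths $[0,1]\to Y$ with the compact-open topology. For continuous maps $f,g\colon X\to Y$, the homotopic distance $\mathrm{D}(f,g)$ is the least integer $n\geq 0$ such that there is an open cover $\{U_0,\dots,U_n\}$ of $X$ with $f|_{U_j}\simeq g|_{U_j}$ for all $j$ ($\infty$ if none exists). The Švarc genus (sectional category) $\mathrm{secat}(p)$ of a fibration $p\colon E\to B$ is the least integer $n\geq 0$ such that $B$ is covered by open sets $V_0,\dots,V_n$ over each of which $p$ admits a continuous local section. *)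

(* Defs.v *)
From HB Require Import structures.
From mathcomp Require Import all_boot all_order all_algebra.
From mathcomp Require Import all_classical all_reals topology normedtype.
Set Implicit Arguments. Unset Strict Implicit. Unset Printing Implicit Defensive.
Import Order.TTheory GRing.Theory Num.Theory numFieldNormedType.Exports.
Local Open Scope classical_set_scope.
Local Open Scope ring_scope.

(* least natural number satisfying P, or None (= infinity) if there is none *)
Definition least_nat (P : nat -> Prop) : option nat :=
  match pselect (exists n, `[< P n >]) with
  | left h => Some (ex_minn h)
  | right _ => None
  end.

Notation unit_interval R := (set_type (`[0%R, 1%R]%classic : set R)).

Lemma zero_in01 (R : realType) : (0 : R) \in (`[0%R, 1%R]%classic : set R).
Proof. by apply/mem_set; rewrite /= in_itv /= lexx ler01. Qed.
Lemma one_in01 (R : realType) : (1 : R) \in (`[0%R, 1%R]%classic : set R).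
Proof. by apply/mem_set; rewrite /= in_itv /= lexx ler01. Qed.

Definition i0 (R : realType) : unit_interval R := exist _ 0 (zero_in01 R).
Definition i1 (R : realType) : unit_interval R := exist _ 1 (one_in01 R).

Definition homotopic_on (R : realType) (X Y : topologicalType)
    (U : set X) (f g : X -> Y) : Prop :=
  exists H : set_type U * unit_interval R -> Y,
    continuous H /\
    (forall u : set_type U, H (u, i0 R) = f (set_val u)) /\
    (forall u : set_type U, H (u, i1 R) = g (set_val u)).

Definition hdist_le (R : realType) (X Y : topologicalType) (f g : X -> Y)
    (n : nat) : Prop :=
  exists U : 'I_n.+1 -> set X,
    (forall j, open (U j)) /\ (forall x, exists j, U j x) /\
    (forall j, homotopic_on R (U j) f g).

Definition homotopic_distance (R : realType) (X Y : topologicalType)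
    (f g : X -> Y) : option nat := least_nat (hdist_le R f g).

Definition path_set (R : realType) (Y : topologicalType)
  : set {compact-open, unit_interval R -> Y} := [set p | continuous p].
Notation path_space R Y := (set_type (@path_set R Y)).

Definition path_val (R : realType) (Y : topologicalType)
  (p : path_space R Y) : unit_interval R -> Y := set_val p.

Definition pullback_set (R : realType) (X Y : topologicalType) (f g : X -> Y)
  : set (X * path_space R Y) :=
  [set xp | path_val xp.2 (i0 R) = f xp.1 /\ path_val xp.2 (i1 R) = g xp.1].

Definition pullback_proj (R : realType) (X Y : topologicalType) (f g : X -> Y)
  (z : set_type (@pullback_set R X Y f g)) : X := (set_val z).1.

Definition local_section (E B : topologicalType) (p : E -> B) (V : set B)
  : Prop :=
  exists s : set_type V -> E, continuous s /\
    (forall v : set_type V, p (s v) = set_val v).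

Definition secat_le (E B : topologicalType) (p : E -> B) (n : nat) : Prop :=
  exists V : 'I_n.+1 -> set B,
    (forall j, open (V j)) /\ (forall b, exists j, V j b) /\
    (forall j, local_section p (V j)).

Definition secat (E B : topologicalType) (p : E -> B) : option nat :=
  least_nat (secat_le p).

(* Main.v *)
Require Import Defs.
From HB Require Import structures.
From mathcomp Require Import all_boot all_order all_algebra.
From mathcomp Require Import all_classical all_reals topology normedtype.
Set Implicit Arguments. Unset Strict Implicit. Unset Printing Implicit Defensive.
Import Order.TTheory GRing.Theory Num.Theory numFieldNormedType.Exports.
Local Open Scope classical_set_scope.
Local Open Scope ring_scope.
Lemma unit_compact (R : realType) : compact [set: unit_interval R].
Proof.
pose A : set R := `[0%R, 1%R]%classic.
pose c (x : R) : unit_interval R :=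
  match pselect (A x) with left h => exist _ x (mem_set h) | right _ => i0 R end.
have cc : {within A, continuous c}.
  apply: (@continuous_comp_initial _ (subspace A) R (@set_val R A)).
  apply: (@subspace_eq_continuous R A R (fun x : subspace A => x)).
    move=> x /set_mem Ax /=; rewrite /c /from_subspace /=; by destruct (pselect (A x)).
  exact: (@continuous_subspaceT R R A id (fun x => cvg_id)).
have -> : [set: unit_interval R] = c @` A.
  apply/seteqP; split => // -[x hx] _; exists x; first exact: set_mem.
  rewrite /c; destruct (pselect (A x)) as [h|h]; first by congr exist; apply: Prop_irrelevance.
  by exfalso; apply: h; exact: set_mem.
apply: continuous_compact => //; exact: segment_compact.
Qed.

Lemma unit_lc (R : realType) : locally_compact [set: unit_interval R].
Proof.
move=> x _; rewrite withinET; exists setT; first exact: filterT.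
by split; [exact: unit_compact | exact: closedT].
Qed.

Lemma unit_reg (R : realType) : regular_space (unit_interval R).
Proof. exact: uniform_regular. Qed.

Section main.
Import ArrowAsCompactOpen.

Lemma homot_iff (R : realType) (X Y : topologicalType) (f g : X -> Y) (U : set X) :
  homotopic_on R U f g <-> local_section (@pullback_proj R X Y f g) U.
Proof.
split.
  move=> [H [cH [H0 H1]]].
  have [ccH cu] := continuous_curry cH.
  pose p (u : set_type U) : path_space R Y :=
    exist _ (curry H u : {compact-open, unit_interval R -> Y}) (mem_set (cu u)).
  have pb : forall u, pullback_set f g (set_val u, p u).
    by move=> u; split; [exact: H0 | exact: H1].
  pose sec (u : set_type U) : set_type (@pullback_set R X Y f g) := exist _ (set_val u, p u) (mem_set (pb u)).
  exists sec; split; last by [].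
  apply: (@continuous_comp_initial _ (set_type U) _ (@set_val _ (@pullback_set R X Y f g))) => u /=.
  have cp : continuous p.
    apply: continuous_comp_initial; exact: ccH.
  have := @cvg_pair _ _ _ (nbhs u) (nbhs (set_val u)) (nbhs (p u)) _ _ _
    (fun u => set_val u) p (@initial_continuous _ _ _ u) (cp u).
  exact.
move=> [s [cs ps]].
pose phi (u : set_type U) : unit_interval R -> Y := path_val (set_val (s u)).2.
exists (uncurry phi); split; last first.
  split => u; rewrite /= /phi; have [h0 h1] := set_mem (valP (s u));
    rewrite ?h0 ?h1; congr (_ _); exact: ps.
apply: continuous_uncurry_regular.
- exact: unit_lc.
- exact: unit_reg.
- move=> u.
  apply: (@continuous_comp _ _ _ s (fun z => path_val (set_val z).2)); first exact: cs.
  apply: (@continuous_comp _ _ _ (fun z => set_val z) (fun z => path_val z.2)); first exact: initial_continuous.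
  apply: (@continuous_comp _ _ _ snd (fun z => path_val z)); first exact: cvg_snd.
  exact: initial_continuous.
- move=> u; exact: (set_mem (valP (set_val (s u)).2)).
Qed.
End main.

Theorem theorem2p8 (R : realType) (X Y : topologicalType) (f g : X -> Y)
    (hf : continuous f) (hg : continuous g) :
  homotopic_distance R f g = secat (@pullback_proj R X Y f g).
Proof.
rewrite /homotopic_distance /secat; congr least_nat.
apply: funext => n; apply: propext; split.
  by move=> [U [oU [cU hU]]]; exists U; do 2 split => //; move=> j; apply/homot_iff; exact: hU.
by move=> [U [oU [cU hU]]]; exists U; do 2 split => //; move=> j; apply/homot_iff; exact: hU.
Qed.
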